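(* For every number of candidates $m\ge 2$, the distortion of \textsc{PluralityMatching} (over all metric spaces, i.e.\ $\alpha=1$, with worst-case choice among the candidates it may return) is $3$, and this is optimal: no deterministic social choice rule has distortion smaller than $3$.
   Context: An election consists of voters $V=\{1,\dots,n\}$, a finite set $C$ of $m$ candidates, and a profile $\sigma=(\sigma_i)_{i\in V}$ of linear orders over $C$; $c\succeq_i c'$ means $c=c'$ or $i$ ranks $c$ above $c'$. A distance function $d$ on $V\cup C$ is nonnegative, symmetric and satisfies the triangle inequality (co-location allowed); it is consistent with $\sigma$ if $d(i,c)\le d(i,c')$ whenever $i$ ranks $c$ above $c'$. $\mathrm{top}(i)$ is $i$'s first-ranked candidate; $\mathrm{SC}(c)=\sum_{i\in V} d(i,c)$. A deterministic social choice rule maps each profile (of any number of voters, over the fixed set $C$) to a candidate; its distortion is $\sup_\sigma \sup_{d \text{ consistent with }\sigma} \mathrm{SC}(f(\sigma))/\min_{c}\mathrm{SC}(c)$. The integral domination graph $G(a)$ of candidate $a$ is the bipartite graph with both sides copies of $V$ and edge $(i,j)$ iff $a\succeq_i \mathrm{top}(j)$. \textsc{PluralityMatching} returns an arbitrary candidate $a$ for which $G(a)$ admits a perfect matching. *)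

(* Defs.v *)
From mathcomp Require Import all_boot all_order all_algebra all_fingroup.
Set Implicit Arguments. Unset Strict Implicit. Unset Printing Implicit Defensive.
Import Order.TTheory GRing.Theory Num.Theory.
Local Open Scope ring_scope.

(* A profile assigns to each voter a linear order over the candidates,
   encoded as a permutation: (sigma i) c is the position of c in voter i's
   ranking (0 = first); i ranks c above c' iff (sigma i c < sigma i c'). *)
Definition profile (n m : nat) := 'I_n -> {perm 'I_m}.

Definition weakly_prefers n m (sigma : profile n m) (i : 'I_n) (c c' : 'I_m) : bool :=
  (sigma i c <= sigma i c')%N.

Definition is_top n m (sigma : profile n m) (j : 'I_n) (t : 'I_m) : bool :=
  [forall c, (sigma j t <= sigma j c)%N].

Definition dom_edge n m (sigma : profile n m) (a : 'I_m) (i j : 'I_n) : bool :=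
  [exists t, is_top sigma j t && weakly_prefers sigma i a t].

(* G(a) admits a perfect matching (both sides are copies of V) *)
Definition has_perfect_matching n m (sigma : profile n m) (a : 'I_m) : Prop :=
  exists pi : {perm 'I_n}, forall i, dom_edge sigma a i (pi i).

Definition point n m := ('I_n + 'I_m)%type.

(* d is a (pseudo)metric on V \cup C (co-location allowed). *)
Definition is_metric (R : realFieldType) n m (d : point n m -> point n m -> R) : Prop :=
  [/\ forall x y, 0 <= d x y,
      forall x, d x x = 0,
      forall x y, d x y = d y x
    & forall x y z, d x z <= d x y + d y z].

Definition consistent (R : realFieldType) n m (sigma : profile n m)
  (d : point n m -> point n m -> R) : Prop :=
  forall (i : 'I_n) (c c' : 'I_m), (sigma i c < sigma i c')%N ->
    d (inl i) (inr c) <= d (inl i) (inr c').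

Definition SC (R : realFieldType) n m (d : point n m -> point n m -> R) (c : 'I_m) : R :=
  \sum_(i < n) d (inl i) (inr c).

Definition rule (m : nat) := forall n, profile n m -> 'I_m.

(* Main.v *)
Require Import Defs.
From mathcomp Require Import all_boot all_order all_algebra all_fingroup.
Import Order.TTheory GRing.Theory Num.Theory.

Lemma argmax_seq (V : eqType) (g : V -> nat) (s : seq V) :
  (0 < size s)%N -> exists2 j, j \in s & forall j', j' \in s -> (g j' <= g j)%N.
Proof.
elim: s => [//|x s IH] _.
case: s IH => [|y s] IH.
  by exists x => [|j']; rewrite ?inE // => /eqP->.
have [j js jmax] := IH isT.
case: (leqP (g x) (g j)) => h.
  exists j; first by rewrite inE js orbT.
  by move=> j'; rewrite inE => /orP[/eqP->//|/jmax].
exists x; first by rewrite inE eqxx.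
move=> j'; rewrite inE => /orP[/eqP->//|/jmax h']; exact: leq_trans h' (ltnW h).
Qed.

Lemma PV (V C : eqType) (v0 : V) (top : V -> C) (rank : V -> C -> nat) (I T : seq V) :
  size I = size T -> (0 < size T)%N ->
  exists a, a \in map top T /\ exists T2, perm_eq T2 T /\
    forall x, (x < size I)%N -> (rank (nth v0 I x) a <= rank (nth v0 I x) (top (nth v0 T2 x)))%N.
Proof.
elim: I T => [|i I IH] T /=; first by move=> <-.
move=> hs hT.
have [j jT jmax] := @argmax_seq _ (fun j => rank i (top j)) T hT.
have hs' : size I = size (rem j T) by rewrite size_rem // -hs.
case: I IH hs hs' => [|i' I] IH hs hs'.
  case: T hs hT jT jmax hs' => [//|t [|//]] _ _; rewrite inE => /eqP -> _ _.
  exists (top t); split; first by rewrite inE.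
  exists [:: t]; split => // x; rewrite ltnS leqn0 => /eqP -> //.
have [a [aT [T2 [pT2 hT2]]]] := IH (rem j T) hs' ltac:(by rewrite -hs').
exists a; split.
  move/mapP: aT => [k kT ->]; apply: map_f; exact: mem_rem kT.
exists (j :: T2); split.
  rewrite perm_sym (permPl (perm_to_rem jT)) /= perm_cons perm_sym //.
case=> [|x] /=.
  move=> _; move/mapP: aT => [k kT ->]; apply: jmax; exact: mem_rem kT.
exact: hT2.
Qed.
Local Open Scope ring_scope.

Lemma part1 n m (sigma : profile n m.+1) : exists a, has_perfect_matching sigma a.
Proof.
pose top (j : 'I_n) : 'I_m.+1 := (sigma j)^-1%g ord0.
have topP j : is_top sigma j (top j).
  by apply/forallP => c; rewrite /top permKV.
case: n sigma top topP => [|n] sigma top topP.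
  by exists ord0, 1%g => -[].
have [|a [_ [T2 [pT2 hT2]]]] := @PV _ _ ord0 top (fun i c => sigma i c) (enum 'I_n.+1) (enum 'I_n.+1) erefl.
  by rewrite size_enum_ord.
have sz : size T2 = n.+1 by rewrite (perm_size pT2) size_enum_ord.
have uT2 : uniq T2 by rewrite (perm_uniq pT2) enum_uniq.
have inj : injective (fun i : 'I_n.+1 => nth ord0 T2 i).
  move=> i k /eqP; rewrite nth_uniq ?sz // => /eqP; exact: val_inj.
exists a, (perm inj) => i; rewrite permE.
apply/existsP; exists (top (nth ord0 T2 i)); rewrite topP /=.
have := hT2 i; rewrite size_enum_ord ltn_ord nth_ord_enum; exact.
Qed.

From mathcomp Require Import lra.

Lemma weak_le (R : realFieldType) n m (sigma : profile n m) (d : point n m -> point n m -> R)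
  (hc : consistent sigma d) i c c' : (sigma i c <= sigma i c')%N ->
  d (inl i) (inr c) <= d (inl i) (inr c').
Proof.
rewrite leq_eqVlt => /orP[/eqP h|h]; last exact: hc.
by have -> : c = c' by apply: (perm_inj (s := sigma i)); apply: val_inj.
Qed.

Lemma part2 (R : realFieldType) n m (sigma : profile n m) a :
  has_perfect_matching sigma a ->
  forall d : point n m -> point n m -> R,
  is_metric d -> consistent sigma d -> forall c, SC d a <= 3 * SC d c.
Proof.
move=> [pi hpi] d [d0 dxx dsym dtri] hc c.
have key i : d (inl i) (inr a) <= d (inl i) (inr c) + 2 * d (inl (pi i)) (inr c).
  have /existsP[t /andP[/forallP ht hw]] := hpi i.
  have h1 := @weak_le _ _ _ _ _ hc _ _ _ hw.
  have h2 := @weak_le _ _ _ _ _ hc _ _ _ (ht c).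
  have h3 := dtri (inl i) (inr c) (inr t).
  have h4 := dtri (inr c) (inl (pi i)) (inr t).
  rewrite (dsym (inr c) (inl (pi i))) in h4.
  lra.
rewrite /SC.
apply: le_trans (ler_sum _ (fun i _ => key i)) _.
rewrite big_split /= -mulr_sumr.
rewrite -(reindex_inj (h := pi) (P := xpredT) (F := fun j => d (inl j) (inr c)) (@perm_inj _ pi)).
lra.
Qed.

Lemma line_metric (R : realFieldType) n m (x : point n m -> R) :
  is_metric (fun p q => `|x p - x q|).
Proof.
split=> [p q|p|p q|p q r]; first exact: normr_ge0.
- by rewrite subrr normr0.
- exact: distrC.
- exact: ler_distD.
Qed.

Lemma e12 (R : realFieldType) : (1 - 2 : R) = -1. Proof. lra. Qed.
Lemma e21 (R : realFieldType) : (2 - 1 : R) = 1. Proof. lra. Qed.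
Lemma e02 (R : realFieldType) : (0 - 2 : R) = -2. Proof. lra. Qed.
Lemma n2 (R : realFieldType) : `|2 : R| = 2. Proof. by rewrite ger0_norm. Qed.

Ltac nrm := rewrite ?e12 ?e21 ?e02 ?subr0 ?sub0r ?subrr ?normrN ?normr0 ?normr1 ?n2; lra.

Lemma part3 (R : realFieldType) m (f : rule m.+2) (beta : R) : beta < 3 ->
     exists n (sigma : profile n m.+2) (d : point n m.+2 -> point n m.+2 -> R) (c : 'I_m.+2),
       [/\ is_metric d, consistent sigma d & beta * SC d c < SC d (f n sigma)].
Proof.
move=> hb.
pose o1 : 'I_m.+2 := @Ordinal m.+2 1 isT.
pose sigma : profile 2 m.+2 := fun i => if i == ord0 then 1%g else tperm ord0 o1.
have s0 : sigma ord0 = 1%g by [].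
have s1 : sigma (lift ord0 ord0) = tperm ord0 o1 by [].
have o10 : (o1 == ord0) = false by [].
exists 2%N, sigma.
have [hw|hw] := eqVneq (f 2 sigma) ord0.
- pose x : point 2 m.+2 -> R := fun p => match p with
    | inl i => if i == ord0 then 1 else 2
    | inr c => if c == o1 then 2 else 0 end.
  exists (fun p q => `|x p - x q|), o1; split.
  + exact: line_metric.
  + move=> i c1 c2; case: i => -[|[|//]] hi.
    * have -> : Ordinal hi = ord0 by apply: val_inj.
      rewrite s0 !perm1 /x /=.
      by case: (c1 == o1); case: (c2 == o1) => _; nrm.
    * have -> : Ordinal hi = lift ord0 ord0 by apply: val_inj.
      rewrite s1 /x /=.
      case: (eqVneq c2 o1) => [->|_]; first by rewrite tpermR.
      by case: (c1 == o1) => _; nrm.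
  + rewrite hw /SC !big_ord_recl big_ord0 /x /= ?big_ord0; nrm.
- pose x : point 2 m.+2 -> R := fun p => match p with
    | inl i => if i == ord0 then 0 else 1
    | inr c => if c == ord0 then 0 else 2 end.
  exists (fun p q => `|x p - x q|), ord0; split.
  + exact: line_metric.
  + move=> i c1 c2; case: i => -[|[|//]] hi.
    * have -> : Ordinal hi = ord0 by apply: val_inj.
      rewrite s0 !perm1 /x /=.
      case: (eqVneq c2 ord0) => [->|_]; first by [].
      by case: (c1 == ord0) => _; nrm.
    * have -> : Ordinal hi = lift ord0 ord0 by apply: val_inj.
      rewrite s1 /x /=.
      by case: (c1 == ord0); case: (c2 == ord0) => _; nrm.
  + rewrite /SC !big_ord_recl /x /= (negbTE hw) ?big_ord0; nrm.
Qed.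

Theorem corollary2 (R : realFieldType) (m : nat) (hm : (2 <= m)%N) :
  (* PluralityMatching is well defined: some candidate always qualifies *)
  (forall n (sigma : profile n m), exists a, has_perfect_matching sigma a)
  /\
  (* distortion at most 3, for every candidate it may return *)
  (forall n (sigma : profile n m) (a : 'I_m), has_perfect_matching sigma a ->
     forall d : point n m -> point n m -> R,
       is_metric d -> consistent sigma d ->
       forall c : 'I_m, SC d a <= 3 * SC d c)
  /\
  (* no deterministic rule has distortion smaller than 3 *)
  (forall (f : rule m) (beta : R), beta < 3 ->
     exists n (sigma : profile n m) (d : point n m -> point n m -> R) (c : 'I_m),
       [/\ is_metric d, consistent sigma d & beta * SC d c < SC d (f n sigma)]).
Proof.
case: m hm => [|[|m]] // _.
split; first by move=> n sigma; exact: part1.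
split; first by move=> n sigma a ha d hd hc c; exact: part2 ha d hd hc c.
move=> f beta hb; exact: part3.
Qed.
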